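(* Let $n\geq1$, $\beta>0$, and let $f(\xi)\in\mathbb{Z}_p[\xi_1,\ldots,\xi_n]$ be an elliptic polynomial of degree $d$. Let $A=\{\xi\in\mathbb{Z}_p^n: |\xi_i|_p=1\text{ for some }i\}$ and let $M$ be a positive integer such that $|f(\xi)|_p\geq p^{-M}$ for all $\xi\in A$. For $t>0$ and $x\in\mathbb{Q}_p^n$ put $Z_0(x,t)=\int_{\mathbb{Z}_p^n}\Psi(x\cdot\xi)e^{-t|f(\xi)|_p^{\beta}}\,d\xi$. Then there exist constants $R>0$ and $C>0$ such that whenever $\|x\|_p\geq R$, $t>0$ and $p^{(M+1)d\beta}\,t\,\|x\|_p^{-d\beta}\leq1$, one has \[ |Z_0(x,t)|\leq C\,t\,\|x\|_p^{-d\beta-n}. \]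
   Context: $\mathbb{Q}_p$ is the field of $p$-adic numbers, $\mathbb{Z}_p$ its ring of integers, $|\cdot|_p$ the $p$-adic absolute value, $\|x\|_p=\max_i|x_i|_p$. $d\xi$ is the Haar measure on $\mathbb{Q}_p^n$ with $\mathbb{Z}_p^n$ of measure $1$. $\Psi$ is the standard additive character of $\mathbb{Q}_p$, $\Psi(a)=\exp(2\pi i\{a\}_p)$ where $\{a\}_p$ is the fractional part of $a$, and $x\cdot\xi=\sum_i x_i\xi_i$. A polynomial $f\in\mathbb{Q}_p[\xi_1,\dots,\xi_n]$ is elliptic of degree $d$ if it is a non-constant homogeneous polynomial of degree $d$ and $f(\xi)=0\iff\xi=0$. *)

(* Defs.v *)
From mathcomp Require Import all_boot all_order all_algebra.
From mathcomp Require Import all_classical all_reals all_analysis.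
Set Implicit Arguments. Unset Strict Implicit. Unset Printing Implicit Defensive.
Import Order.TTheory GRing.Theory Num.Theory numFieldNormedType.Exports.
Local Open Scope classical_set_scope.
Local Open Scope ring_scope.

(* ---------- p-adic integers: compatible systems of residues ----------
   an element a of Z_p is given by its residues  padic_res a k = a mod p^k
   (in [0, p^k)), compatible:  (a mod p^(k+1)) mod p^k = a mod p^k.      *)
Record padic_int (p : nat) := PadicInt {
  padic_res : nat -> nat ;
  padic_res_compat : forall k, (padic_res k.+1 %% p ^ k = padic_res k)%N }.

Lemma pint_of_nat_compat (p a : nat) k :
  ((a %% p ^ k.+1) %% p ^ k = a %% p ^ k)%N.
Proof. apply: modn_dvdm; exact: dvdn_exp2l (leqnSn k). Qed.

Definition pint_of_nat (p a : nat) : padic_int p :=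
  @PadicInt p (fun k => a %% p ^ k)%N (pint_of_nat_compat p a).

Definition padic_abs_res {R : realType} (p : nat) (r : nat -> nat) : R :=
  inf ((fun k : nat => (p%:R : R) ^- k) @` [set k | r k = 0%N]).

(* ---------- p-adic numbers ----------
   a pair (m, y) represents the p-adic number p^{-m} * y, y in Z_p.
   (Every element of Q_p has such representations.) *)
Definition padic_num (p : nat) := (nat * padic_int p)%type.

Definition padic_abs_num {R : realType} (p : nat) (x : padic_num p) : R :=
  (p%:R : R) ^+ x.1 * padic_abs_res p (padic_res x.2).

Definition padic_vnorm {R : realType} (p n : nat) (x : 'I_n -> padic_num p) : R :=
  \big[Num.max/0]_(i < n) padic_abs_num (R:=R) (x i).

(* ---------- polynomials in Z_p[xi_1..xi_n] ----------
   a polynomial is a finite list of terms (alpha, c) standing for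
   c * xi^alpha, alpha : 'I_n -> nat a multi-index, c in Z_p. *)
Definition zpoly (p n : nat) := seq (('I_n -> nat) * padic_int p).

Definition mdeg (n : nat) (alpha : 'I_n -> nat) : nat := (\sum_(i < n) alpha i)%N.

Definition zpoly_eval_res (p n : nat) (f : zpoly p n) (xi : 'I_n -> padic_int p)
  (k : nat) : nat :=
  ((\sum_(t <- f) padic_res t.2 k * \prod_(i < n) padic_res (xi i) k ^ t.1 i)
     %% p ^ k)%N.

(* With M = max m_i and
   D = max total degree of the terms of f,
     f(x) = p^{-M D} * sum_t c_t p^{M D - sum_i m_i alpha_i} prod_i y_i^{alpha_i},
   and the last sum lies in Z_p; these are its residues mod p^k. *)
Definition zpoly_qeval_res (p n : nat) (f : zpoly p n) (x : 'I_n -> padic_num p)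
  (k : nat) : nat :=
  let M := (\max_(i < n) (x i).1)%N in
  let D := (\max_(t <- f) mdeg t.1)%N in
  ((\sum_(t <- f) padic_res t.2 k * p ^ (M * D - \sum_(i < n) (x i).1 * t.1 i)
      * \prod_(i < n) padic_res (x i).2 k ^ t.1 i) %% p ^ k)%N.

Definition zpoly_vanishes_at (p n : nat) (f : zpoly p n) (x : 'I_n -> padic_num p) : Prop :=
  forall k, zpoly_qeval_res f x k = 0%N.

Definition padic_vec_zero (p n : nat) (x : 'I_n -> padic_num p) : Prop :=
  forall i k, padic_res (x i).2 k = 0%N.

Definition elliptic (p n : nat) (f : zpoly p n) (d : nat) : Prop :=
  [/\ (0 < d)%N,
      all (fun t => mdeg t.1 == d) f &
      forall x : 'I_n -> padic_num p, zpoly_vanishes_at f x <-> padic_vec_zero x].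

(* the fractional part {x . xi}_p for x in Q_p^n, xi in Z_p^n :
   with M = max m_i, x.xi = p^{-M} w, w = sum_i p^{M-m_i} y_i xi_i in Z_p,
   and {x.xi}_p = (w mod p^M) / p^M. *)
Definition dot_frac {R : realType} (p n : nat) (x : 'I_n -> padic_num p)
  (xi : 'I_n -> padic_int p) : R :=
  let M := (\max_(i < n) (x i).1)%N in
  ((\sum_(i < n) p ^ (M - (x i).1) * padic_res (x i).2 M * padic_res (xi i) M)
     %% p ^ M)%N%:R / (p%:R : R) ^+ M.

(* Psi(a) = exp(2 pi i {a}_p): real and imaginary parts *)
Definition Z0_integrand_re {R : realType} (p n : nat) (f : zpoly p n) (beta : R)
  (x : 'I_n -> padic_num p) (t : R) (xi : 'I_n -> padic_int p) : R :=
  cos (2 * pi * dot_frac x xi) *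
  expR (- t * (padic_abs_res p (zpoly_eval_res f xi) `^ beta)).

Definition Z0_integrand_im {R : realType} (p n : nat) (f : zpoly p n) (beta : R)
  (x : 'I_n -> padic_num p) (t : R) (xi : 'I_n -> padic_int p) : R :=
  sin (2 * pi * dot_frac x xi) *
  expR (- t * (padic_abs_res p (zpoly_eval_res f xi) `^ beta)).

(* Haar integral over Z_p^n (normalised: vol(Z_p^n) = 1) of a continuous g,
   as the limit of the Riemann sums over the grid {0,..,p^k-1}^n. *)
Definition haar_riemann_sum {R : realType} (p n : nat)
  (g : ('I_n -> padic_int p) -> R) (k : nat) : R :=
  (p%:R : R) ^- (k * n) *
  \sum_(a : {ffun 'I_n -> 'I_(p ^ k)}) g (fun i => pint_of_nat p (a i)).

Definition haar_integral_Zpn {R : realType} (p n : nat)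
  (g : ('I_n -> padic_int p) -> R) : R :=
  limn (haar_riemann_sum g).

Definition Z0_abs {R : realType} (p n : nat) (f : zpoly p n) (beta : R)
  (x : 'I_n -> padic_num p) (t : R) : R :=
  Num.sqrt (haar_integral_Zpn (Z0_integrand_re f beta x t) ^+ 2 +
            haar_integral_Zpn (Z0_integrand_im f beta x t) ^+ 2).

(* Main.v *)
Require Import Defs.
From mathcomp Require Import all_boot all_order all_algebra.
From mathcomp Require Import all_classical all_reals all_analysis.
From mathcomp Require Import ring lra zify.

Module M_A.
Set Implicit Arguments. Unset Strict Implicit. Unset Printing Implicit Defensive.

Lemma dvdn_modX (d m x : nat) : d %| m -> (d %| x %% m) = (d %| x).
Proof. by move=> dm; rewrite /dvdn (modn_dvdm x dm). Qed.

Lemma sum_cong (I : Type) (r : seq I) (F G : I -> nat) q :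
  (forall i, F i = G i %[mod q]) -> \sum_(i <- r) F i = \sum_(i <- r) G i %[mod q].
Proof.
move=> H; apply: (big_ind2 (fun x y => x = y %[mod q])) => //.
by move=> x1 x2 y1 y2 e1 e2; rewrite -modnDm e1 e2 modnDm.
Qed.

Lemma prod_cong (I : Type) (r : seq I) (F G : I -> nat) q :
  (forall i, F i = G i %[mod q]) -> \prod_(i <- r) F i = \prod_(i <- r) G i %[mod q].
Proof.
move=> H; apply: (big_ind2 (fun x y => x = y %[mod q])) => //.
by move=> x1 x2 y1 y2 e1 e2; rewrite -modnMm e1 e2 modnMm.
Qed.

Lemma res_compat (p : nat) (c : padic_int p) k l : 0 < p ->
  l <= k -> padic_res c k %% p ^ l = padic_res c l.
Proof.
move=> pp lk; rewrite -(subnK lk); elim: (k - l) => [|e IH].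
  by rewrite add0n modn_small // -(padic_res_compat c l) ltn_pmod // expn_gt0 pp.
rewrite addSn -IH -(padic_res_compat c (e + l)).
by rewrite (modn_dvdm _ (dvdn_exp2l _ (leq_addl e l))).
Qed.

Lemma res0 (p : nat) (c : padic_int p) : padic_res c 0 = 0.
Proof. by rewrite -(padic_res_compat c 0) expn0 modn1. Qed.

Definition Rv (p n : nat) (f : zpoly p n) (a : 'I_n -> nat) (k : nat) : nat :=
  \sum_(t <- f) padic_res t.2 k * \prod_(i < n) a i ^ t.1 i.

Definition pn (p n : nat) (a : 'I_n -> nat) : 'I_n -> padic_int p :=
  fun i => pint_of_nat p (a i).

Lemma Rv_cong p n (f : zpoly p n) a b k q :
  (forall i, a i = b i %[mod q]) -> Rv f a k = Rv f b k %[mod q].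
Proof.
move=> H; apply: sum_cong => t.
rewrite -modnMmr (prod_cong _ (G := fun i => b i ^ t.1 i)) ?modnMmr //.
by move=> i; rewrite -modnXm H modnXm.
Qed.

Lemma eval_Rv p n (f : zpoly p n) a k :
  zpoly_eval_res f (pn p a) k = Rv f a k %% p ^ k.
Proof.
rewrite /zpoly_eval_res /=.
apply: (@Rv_cong p n f (fun i => a i %% p ^ k) a k (p ^ k)) => i.
by rewrite modn_mod.
Qed.

Lemma Rv_compat p n (f : zpoly p n) a k l : 0 < p ->
  l <= k -> Rv f a k = Rv f a l %[mod p ^ l].
Proof.
move=> pp lk; apply: sum_cong => t.
by rewrite -modnMml res_compat // modnMml.
Qed.

Lemma Rv_hom p n (f : zpoly p n) d a a' j k :
  all (fun t => mdeg t.1 == d) f ->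
  (forall i, a i = p ^ j * a' i) -> Rv f a k = p ^ (j * d) * Rv f a' k.
Proof.
move=> Hd Ha; rewrite /Rv big_distrr /=.
elim: f Hd => [|t f IH] /=; first by rewrite !big_nil.
move=> /andP[/eqP Ht Hf]; rewrite !big_cons IH //; congr (_ + _).
rewrite mulnCA; congr (_ * _).
rewrite -Ht /mdeg big_distrr expn_sum -big_split /=; apply: eq_bigr => i _.
by rewrite Ha expnMn expnM.
Qed.

Lemma eval_compat p n (f : zpoly p n) a k l : 0 < p ->
  l <= k -> zpoly_eval_res f (pn p a) k %% p ^ l = zpoly_eval_res f (pn p a) l.
Proof.
move=> pp lk; rewrite !eval_Rv (modn_dvdm _ (dvdn_exp2l _ lk)).
by rewrite (Rv_compat _ _ pp lk).
Qed.

Lemma cancel_mod p j x y e : 0 < p ->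
  p ^ j * x = p ^ j * y %[mod p ^ (j + e)] -> x = y %[mod p ^ e].
Proof.
move=> pp; rewrite expnD -!muln_modr => /eqP; rewrite eqn_pmul2l ?expn_gt0 ?pp //.
by move/eqP.
Qed.

End M_A.
Import M_A.

Module M_B.
Set Implicit Arguments. Unset Strict Implicit. Unset Printing Implicit Defensive.
Import Order.TTheory GRing.Theory Num.Theory numFieldNormedType.Exports.
Local Open Scope classical_set_scope.
Local Open Scope ring_scope.

Lemma absr_lb (R : realType) (p : nat) (r : nat -> nat) :
  (1 < p)%N -> has_lbound ((fun k : nat => (p%:R : R) ^- k) @` [set k | r k = 0%N]).
Proof.
move=> p1; exists 0 => _ [k _ <-]; rewrite invr_ge0 exprn_ge0 // ler0n.
Qed.

Lemma absr_le (R : realType) (p : nat) (r : nat -> nat) k :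
  (1 < p)%N -> r k = 0%N -> padic_abs_res (R:=R) p r <= (p%:R : R) ^- k.
Proof.
move=> p1 rk; apply: (ge_inf (absr_lb R r p1)); by exists k.
Qed.

Lemma absr_ge0 (R : realType) (p : nat) (r : nat -> nat) :
  (1 < p)%N -> r 0%N = 0%N -> 0 <= padic_abs_res (R:=R) p r.
Proof.
move=> p1 r0; apply: lb_le_inf; first by exists 1; exists 0%N => //; rewrite expr0 invr1.
by move=> _ [k _ <-]; rewrite invr_ge0 exprn_ge0 // ler0n.
Qed.

Lemma absr_ext (R : realType) (p : nat) (r s : nat -> nat) :
  (forall k, r k = 0%N <-> s k = 0%N) ->
  padic_abs_res (R:=R) p r = padic_abs_res (R:=R) p s.
Proof.
move=> H; rewrite /padic_abs_res; congr (inf (_ @` _)).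
by apply/seteqP; split => k /=; rewrite H.
Qed.

Lemma absr_exact (R : realType) (p : nat) (r : nat -> nat) v :
  (1 < p)%N -> (forall k, r k = 0%N <-> (k <= v)%N) ->
  padic_abs_res (R:=R) p r = (p%:R : R) ^- v.
Proof.
move=> p1 H; apply/eqP; rewrite eq_le; apply/andP; split.
  by apply: absr_le => //; apply/H.
apply: lb_le_inf; first by exists (p%:R ^- v); exists v => //; apply/H.
move=> _ [k /H kv <-]; rewrite lef_pV2 ?posrE ?exprn_gt0 ?ltr0n ?(ltn_trans _ p1) //.
by rewrite ler_eXn2l // ?ltr1n.
Qed.

Lemma absr_unit (R : realType) (p a : nat) :
  prime p -> ~~ (p %| a)%N -> padic_abs_res (R:=R) p (padic_res (pint_of_nat p a)) = 1.
Proof.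
move=> pp pa; rewrite (@absr_exact R p _ 0%N) ?prime_gt1 // ?expr0 ?invr1 //.
move=> [|k] /=; first by rewrite expn0 modn1.
split=> // /eqP; rewrite -/(dvdn _ _) => H; case/negP: pa.
by apply: dvdn_trans H; rewrite dvdn_exp // ltn0Sn.
Qed.

End M_B.
Import M_B.

Module M_C.
Set Implicit Arguments. Unset Strict Implicit. Unset Printing Implicit Defensive.
Import Order.TTheory GRing.Theory Num.Theory numFieldNormedType.Exports.
Local Open Scope classical_set_scope.
Local Open Scope ring_scope.

Definition HypM (R : realType) p n (f : zpoly p n) M :=
  forall xi : 'I_n -> padic_int p,
      (exists i, padic_abs_res p (padic_res (xi i)) = (1 : R)) ->
      (p%:R : R) ^- M <= padic_abs_res p (zpoly_eval_res f xi).

Lemma pinv_lt (R : realType) (p M : nat) : (1 < p)%N ->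
  (p%:R : R) ^- M.+1 < (p%:R : R) ^- M.
Proof.
move=> p1; have p0 : (0 < p)%N by apply: ltn_trans p1.
rewrite ltf_pV2 ?posrE ?exprn_gt0 ?ltr0n //.
by rewrite ltr_eXn2l // ltr1n.
Qed.

Lemma loc_const (R : realType) p n (f : zpoly p n) d M (a b a' b' : 'I_n -> nat) j :
  prime p -> all (fun t => mdeg t.1 == d) f -> HypM R f M ->
  (forall i, a i = p ^ j * a' i)%N -> (forall i, b i = p ^ j * b' i)%N ->
  (forall i, a' i = b' i %[mod p ^ M.+1])%N -> (exists i, ~~ (p %| a' i)%N) ->
  padic_abs_res (R:=R) p (zpoly_eval_res f (pn p a)) =
  padic_abs_res (R:=R) p (zpoly_eval_res f (pn p b)).
Proof.
move=> pp Hd HM Ha Hb Hab [i0 Hi0].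
have p1 := prime_gt1 pp; have p0 : (0 < p)%N by apply: ltn_trans p1.
set N := (j * d + M.+1)%N.
have eqN : forall k, (k <= N)%N -> zpoly_eval_res f (pn p a) k = zpoly_eval_res f (pn p b) k.
  move=> k kN; rewrite !eval_Rv (Rv_hom _ Hd Ha) (Rv_hom _ Hd Hb).
  have e : (p ^ (j * d) * Rv f a' k = p ^ (j * d) * Rv f b' k %[mod p ^ N])%N.
    by rewrite /N expnD -!muln_modr (Rv_cong _ _ Hab).
  by rewrite -(modn_dvdm _ (dvdn_exp2l p kN)) e (modn_dvdm _ (dvdn_exp2l p kN)).
have neN : zpoly_eval_res f (pn p a) N <> 0%N.
  move=> h; move: h; rewrite eval_Rv (Rv_hom _ Hd Ha) => /eqP.
  rewrite -/(dvdn _ _) /N expnD dvdn_pmul2l ?expn_gt0 ?p0 // => h.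
  have h2 : zpoly_eval_res f (pn p a') M.+1 = 0%N.
    by rewrite eval_Rv -(Rv_compat f a' p0 (leq_addl (j * d) M.+1)); apply/eqP.
  have le1 := @absr_le R p _ _ p1 h2.
  have le2 : (p%:R : R) ^- M <= padic_abs_res p (zpoly_eval_res f (pn p a')).
    by apply: HM; exists i0; rewrite absr_unit.
  have := le_trans le2 le1; rewrite leNgt => /negP; apply; exact: pinv_lt.
have down : forall (c : 'I_n -> nat) k, (N <= k)%N -> zpoly_eval_res f (pn p c) k = 0%N ->
    zpoly_eval_res f (pn p c) N = 0%N.
  by move=> c k Nk e; rewrite -(eval_compat _ _ p0 Nk) e mod0n.
apply: absr_ext => k; have [kN|Nk] := leqP k N; first by rewrite eqN.
have Nk' := ltnW Nk.
split=> h; exfalso; apply: neN.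
  exact: down Nk' h.
by rewrite eqN //; apply: down Nk' h.
Qed.

Lemma up_bound (R : realType) p n (f : zpoly p n) d (a : 'I_n -> nat) j :
  prime p -> all (fun t => mdeg t.1 == d) f ->
  (forall i, p ^ j %| a i)%N ->
  padic_abs_res (R:=R) p (zpoly_eval_res f (pn p a)) <= (p%:R : R) ^- (j * d).
Proof.
move=> pp Hd Ha; apply: absr_le; first exact: prime_gt1.
rewrite eval_Rv (@Rv_hom p n f d a (fun i => a i %/ p ^ j)%N j _ Hd).
  by apply/eqP; rewrite -/(dvdn _ _) dvdn_mulr.
by move=> i; rewrite mulnC divnK //; exact: Ha.
Qed.

End M_C.
Import M_C.

Module M_D.
Set Implicit Arguments. Unset Strict Implicit. Unset Printing Implicit Defensive.
Import Order.TTheory GRing.Theory Num.Theory numFieldNormedType.Exports.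
Local Open Scope ring_scope.

Lemma frac_split (R : realType) (X Q : nat) : (0 < Q)%N ->
  2 * pi * (X%:R / Q%:R) = 2 * pi * ((X %% Q)%N%:R / Q%:R) + (pi *+ 2) *+ (X %/ Q)%N :> R.
Proof.
move=> Q0; rewrite {1}(divn_eq X Q) natrD natrM.
have Qn0 : (Q%:R : R) != 0 by rewrite pnatr_eq0 -lt0n.
rewrite -mulr_natr -[pi *+ 2]mulr_natr; field.
exact: Qn0.
Qed.

Lemma cos_frac (R : realType) (X Q : nat) : (0 < Q)%N ->
  cos (2 * pi * ((X %% Q)%N%:R / Q%:R)) = cos (2 * pi * (X%:R / Q%:R)) :> R.
Proof. by move=> Q0; rewrite (@frac_split R X Q Q0) (periodicn (@cosD2pi R)). Qed.

Lemma sin_frac (R : realType) (X Q : nat) : (0 < Q)%N ->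
  sin (2 * pi * ((X %% Q)%N%:R / Q%:R)) = sin (2 * pi * (X%:R / Q%:R)) :> R.
Proof. by move=> Q0; rewrite (@frac_split R X Q Q0) (periodicn (@sinD2pi R)). Qed.

Lemma cos_ne1 (R : realType) (c Q : nat) : (0 < c)%N -> (c < Q)%N ->
  cos (2 * pi * (c%:R / Q%:R)) != 1 :> R.
Proof.
move=> c0 cQ; pose y : R := pi * (c%:R / Q%:R).
have Q0 : (0 < Q)%N by apply: leq_ltn_trans cQ.
have hy : 0 < y < pi.
  have u0 : 0 < (c%:R / Q%:R : R) by rewrite divr_gt0 // ltr0n.
  have u1 : (c%:R / Q%:R : R) < 1 by rewrite ltr_pdivrMr ?ltr0n // mul1r ltr_nat.
  apply/andP; split; first by rewrite mulr_gt0 // pi_gt0.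
  by rewrite -[X in _ < X]mulr1 ltr_pM2l // pi_gt0.
have s0 := sin_gt0_pi hy.
have -> : 2 * pi * (c%:R / Q%:R) = y *+ 2 by rewrite /y mulr2n mulrDl !mul1r mulrDl.
rewrite cos_mulr2n cos2sin2; apply/eqP => h.
have : sin y ^+ 2 = 0 by move: h; lra.
by move/eqP; rewrite expf_eq0 /= gt_eqF.
Qed.

Lemma shift_vanish (R : realType) (T : finType) (tau : T -> T) (D : pred T)
  (th G : T -> R) phi :
  injective tau -> (forall a, D (tau a) = D a) -> cos phi != 1 ->
  (forall a, cos (th (tau a)) = cos (th a + phi)) ->
  (forall a, sin (th (tau a)) = sin (th a + phi)) ->
  (forall a, D a -> G (tau a) = G a) ->
  \sum_(a | D a) cos (th a) * G a = 0 /\ \sum_(a | D a) sin (th a) * G a = 0.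
Proof.
move=> inj HD c1 Hc Hs HG.
set Sc := \sum_(a | D a) _; set Ss := \sum_(a | D a) _.
set c := cos phi; set s := sin phi.
have ec : Sc = c * Sc - s * Ss.
  rewrite {1}/Sc (reindex_inj inj) /= (eq_bigl D) //.
  rewrite /Sc /Ss !mulr_sumr -sumrB; apply: eq_bigr => a Da.
  by rewrite Hc HG // cosD /c /s; ring.
have es : Ss = s * Sc + c * Ss.
  rewrite {1}/Ss (reindex_inj inj) /= (eq_bigl D) //.
  rewrite /Sc /Ss !mulr_sumr -big_split /=; apply: eq_bigr => a Da.
  by rewrite Hs HG // sinD /c /s; ring.
have E1 : (1 - c) * Sc + s * Ss = 0 by rewrite mulrBl mul1r {1}ec; ring.
have E2 : (1 - c) * Ss - s * Sc = 0 by rewrite mulrBl mul1r {1}es; ring.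
have cs : c ^+ 2 + s ^+ 2 = 1 by rewrite cos2Dsin2.
have c2 : 2 - 2 * c != 0.
  apply/negP => /eqP h; have hc : c = 1 by lra.
  by move: c1; rewrite -/c hc eqxx.
split.
  have : (2 - 2 * c) * Sc = 0.
    have -> : (2 - 2 * c) * Sc = (1 - c) * ((1 - c) * Sc + s * Ss) - s * ((1 - c) * Ss - s * Sc)
       - (c ^+ 2 + s ^+ 2 - 1) * Sc by ring.
    by rewrite E1 E2 cs; ring.
  by move/eqP; rewrite mulf_eq0 (negbTE c2) => /eqP.
have : (2 - 2 * c) * Ss = 0.
  have -> : (2 - 2 * c) * Ss = (1 - c) * ((1 - c) * Ss - s * Sc) + s * ((1 - c) * Sc + s * Ss)
     - (c ^+ 2 + s ^+ 2 - 1) * Ss by ring.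
  by rewrite E1 E2 cs; ring.
by move/eqP; rewrite mulf_eq0 (negbTE c2) => /eqP.
Qed.

End M_D.
Import M_D.

Module M_E.
Set Implicit Arguments. Unset Strict Implicit. Unset Printing Implicit Defensive.
Import Order.TTheory GRing.Theory Num.Theory numFieldNormedType.Exports.

Lemma card_mult (N d e : nat) : 0 < d -> N = d * e ->
  #|[pred x : 'I_N | d %| x]| = e.
Proof.
move=> d0 Ne.
have lt : forall y : 'I_e, y * d < N.
  by move=> y; rewrite Ne [d * e]mulnC ltn_pmul2r.
pose f (y : 'I_e) : 'I_N := Ordinal (lt y).
have finj : injective f.
  by move=> y y' /(congr1 val) /= /eqP; rewrite eqn_pmul2r // => /eqP /val_inj.
rewrite -[RHS]card_ord -(fintype.card_image finj 'I_e).
apply: eq_card => x; rewrite inE; apply/idP/fintype.imageP.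
  move=> dx; have xl : x %/ d < e.
    by rewrite ltn_divLR // mulnC -Ne.
  by exists (Ordinal xl) => //; apply: val_inj => /=; rewrite divnK.
by move=> [y _ ->] /=; rewrite dvdn_mull.
Qed.

Lemma card_B (n p k j : nat) : 0 < p -> j <= k ->
  #|[pred a : {ffun 'I_n -> 'I_(p ^ k)} | [forall i, p ^ j %| a i]]| = (p ^ (k - j)) ^ n.
Proof.
move=> p0 jk.
have -> : #|[pred a : {ffun 'I_n -> 'I_(p ^ k)} | [forall i, p ^ j %| a i]]| =
  #|ffun_on_mem 'I_n (mem [pred x : 'I_(p ^ k) | p ^ j %| x])|.
  apply: eq_card => a; rewrite [in LHS]inE; apply/forallP/ffun_onP => H i; move: (H i); by rewrite inE.
rewrite card_ffun_on card_ord (@card_mult _ (p ^ j) (p ^ (k - j))) ?expn_gt0 ?p0 //.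
by rewrite -expnD subnKC.
Qed.

Local Open Scope ring_scope.

Lemma shell_sum (R : realType) (T : finType) (B : nat -> pred T) (h : T -> R)
  (w : nat -> R) (K : nat) (S rho : R) :
  0 <= S -> 0 <= rho -> rho < 1 ->
  (forall j a, (j < K)%N -> B j.+1 a -> B j a) ->
  (forall a, 0 <= h a) ->
  (forall j a, (j <= K)%N -> B j a -> h a <= w j) ->
  (forall j, (j <= K)%N -> #|B j|%:R * w j <= S * rho ^+ j) ->
  forall j, (j <= K)%N -> \sum_(a | B j a) h a <= S * rho ^+ j / (1 - rho).
Proof.
move=> S0 r0 r1 Bmon h0 hw Bw.
have r1' : 0 < 1 - rho by rewrite subr_gt0.
have base : forall j, (j <= K)%N -> \sum_(a | B j a) h a <= S * rho ^+ j.
  move=> j jK; apply: le_trans (Bw j jK).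
  apply: le_trans (_ : \sum_(a | B j a) w j <= _).
    by apply: ler_sum => a Ba; apply: hw.
  by rewrite sumr_const mulr_natl.
have grow : forall X, 0 <= X -> X <= X / (1 - rho).
  by move=> X X0; rewrite ler_pdivlMr //; nra.
have key : forall l j, j = (K - l)%N -> (l <= K)%N ->
    \sum_(a | B j a) h a <= S * rho ^+ j / (1 - rho).
  elim=> [|l IH] j -> lK.
    rewrite subn0; apply: le_trans (base _ (leqnn K)) _.
    by apply: grow; rewrite mulr_ge0 // exprn_ge0.
  set j0 := (K - l.+1)%N.
  have jK : (j0 < K)%N by rewrite ltn_subrL; apply/andP; split => //; apply: leq_trans lK.
  have ej : j0.+1 = (K - l)%N by rewrite /j0 subnSK.
  rewrite (bigID (B j0.+1)) /=.
  have e1 : \sum_(a | B j0 a && B j0.+1 a) h a = \sum_(a | B (K - l)%N a) h a.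
    rewrite ej; apply: eq_bigl => a; apply/andP/idP => [[]//|Ba]; split => //.
    by apply: (Bmon j0 a jK); rewrite ej.
  rewrite e1.
  have e2 : \sum_(a | B j0 a && ~~ B j0.+1 a) h a <= S * rho ^+ j0.
    apply: le_trans (base _ (ltnW jK)).
    rewrite [X in X <= _]big_mkcond [X in _ <= X]big_mkcond; apply: ler_sum => a _.
    by case: (B _ a); case: (B _ a) => //=.
  have e3 := IH (K - l)%N erefl (ltnW lK).
  rewrite addrC; apply: le_trans (lerD e2 e3) _.
  rewrite -ej exprS.
  rewrite le_eqVlt; apply/orP; left; apply/eqP; field.
  by rewrite subr_eq0 eq_sym lt_eqF.
move=> j jK; apply: (key (K - j)%N) => //; first by rewrite subKn.
exact: leq_subr.
Qed.

End M_E.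
Import M_E.

Module M_P.
Set Implicit Arguments. Unset Strict Implicit. Unset Printing Implicit Defensive.
Import Order.TTheory GRing.Theory Num.Theory numFieldNormedType.Exports.
Local Open Scope ring_scope.

Lemma powR_exprn (R : realType) (a e : R) (m : nat) : 0 <= a ->
  (a ^+ m) `^ e = (a `^ e) ^+ m.
Proof.
move=> a0; rewrite -powR_mulrn // -powRrM mulrC powRrM powR_mulrn //.
exact: powR_ge0.
Qed.

Lemma pow_inv_beta (R : realType) (pr beta : R) (j d : nat) : 0 < pr ->
  (pr ^- (j * d)) `^ beta = (pr `^ (- (d%:R * beta))) ^+ j.
Proof.
move=> p0; rewrite -powR_invn ?ltW // -powRrM -powR_mulrn ?powR_ge0 //.
rewrite -powRrM; congr (_ `^ _); rewrite natrM; ring.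
Qed.

Lemma rho_eq (R : realType) (pr b : R) (n : nat) : 0 < pr ->
  pr `^ (- b - n%:R) = pr `^ (- b) / pr ^+ n.
Proof.
move=> p0; rewrite powRD; last by rewrite implybE (gt_eqF p0) orbT.
by rewrite powR_invn ?ltW.
Qed.

Lemma powR_lt1 (R : realType) (pr e : R) : 1 < pr -> e < 0 -> pr `^ e < 1.
Proof.
move=> p1 e0; rewrite lt_neqAle; apply/andP; split.
  by rewrite powR_eq1 negb_or gt_eqF //= negb_or -leNgt ltW ?(lt_trans ltr01) //= lt_eqF.
by rewrite -(powRr0 pr); apply: ler_powR; rewrite ?ltW.
Qed.

Lemma one_sub_exp (R : realType) (t X Y : R) : 0 < t -> X <= Y ->
  1 - expR (- t * X) <= t * Y.
Proof.
move=> t0 XY; have := expR_ge1Dx (- t * X).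
have : t * X <= t * Y by rewrite ler_pM2l.
lra.
Qed.

Lemma card_real (R : realType) (t qd : R) (p k j n : nat) : (0 < p)%N -> (j <= k)%N ->
  ((p ^ (k - j)) ^ n)%N%:R * (t * qd ^+ j) =
  t * (p%:R : R) ^+ (k * n) * (qd / (p%:R : R) ^+ n) ^+ j.
Proof.
move=> p0 jk; have pn0 : (p%:R : R) != 0 by rewrite pnatr_eq0 -lt0n.
rewrite -expnM natrX exprMn exprVn -exprM.
have -> : (k * n = (k - j) * n + n * j)%N by rewrite mulnC [((k - j) * n)%N]mulnC -mulnDr subnK.
rewrite exprD; field.
by rewrite expf_neq0.
Qed.

End M_P.
Import M_P.

Module M_L.
Set Implicit Arguments. Unset Strict Implicit. Unset Printing Implicit Defensive.
Import Order.TTheory GRing.Theory Num.Theory numFieldNormedType.Exports.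
Local Open Scope classical_set_scope.
Local Open Scope ring_scope.

Lemma lim_bound (R : realType) (u : nat -> R) B : 0 <= B ->
  (exists N, forall k, (N <= k)%N -> `|u k| <= B) -> `|limn u| <= B.
Proof.
move=> B0 [N HN].
have [cu|ncu] := pselect (cvgn u); last first.
  have : limn u = point.
    by apply/eqP; apply: contrapT => /negP h; apply: ncu; exact: cvgNpoint.
  by move=> ->; rewrite normr0.
have ev1 : \forall k \near \oo, u k <= B.
  by exists N => // k /= /HN; apply: le_trans; exact: ler_norm.
have ev2 : \forall k \near \oo, - B <= u k.
  by exists N => // k /= /HN; rewrite ler_norml => /andP[].
have h1 : limn u <= B := closed_cvg _ (@closed_le R B) ev1 _ cu.
have h2 : - B <= limn u := closed_cvg _ (@closed_ge R (- B)) ev2 _ cu.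
by rewrite ler_norml h1 h2.
Qed.

End M_L.
Import M_L.

Module M_F.
Set Implicit Arguments. Unset Strict Implicit. Unset Printing Implicit Defensive.

Definition Bset (p k n j : nat) (a : {ffun 'I_n -> 'I_(p ^ k)}) : bool :=
  [forall i, p ^ j %| a i].

Definition tau (p k n : nat) (i0 : 'I_n) (u : nat) (a : {ffun 'I_n -> 'I_(p ^ k)}) :
  {ffun 'I_n -> 'I_(p ^ k)} :=
  [ffun i => if i == i0 then insubd (a i) ((a i + u) %% p ^ k) else a i].

Lemma tau_val p k n i0 u a i : 0 < p ->
  val (@tau p k n i0 u a i) = if i == i0 then (a i + u) %% p ^ k else a i.
Proof.
move=> p0; rewrite ffunE; case: eqP => _ //.
by rewrite val_insubd ltn_pmod ?expn_gt0 ?p0.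
Qed.

Lemma tau_inj p k n i0 u : 0 < p -> injective (@tau p k n i0 u).
Proof.
move=> p0 a b e; apply/ffunP => i; apply: val_inj.
have := congr1 (fun c : {ffun 'I_n -> 'I_(p ^ k)} => val (c i)) e => /=; rewrite !tau_val //.
case: eqP => // _ /eqP; rewrite eqn_modDr => /eqP.
by rewrite !modn_small.
Qed.

Lemma tau_B p k n i0 u j a : 0 < p -> j <= k -> p ^ j %| u ->
  Bset j (@tau p k n i0 u a) = Bset j a.
Proof.
move=> p0 jk ju; apply: eq_forallb => i; rewrite tau_val //.
case: eqP => // _; rewrite dvdn_modX ?dvdn_exp2l //.
by rewrite dvdn_addl.
Qed.

Lemma B_mon p k n j a : Bset (p := p) (k := k) (n := n) j.+1 a -> Bset j a.
Proof.
move=> /forallP H; apply/forallP => i; apply: dvdn_trans (H i).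
by rewrite expnS dvdn_mull.
Qed.

Definition Wsum (p n : nat) (x : 'I_n -> padic_num p) (a : 'I_n -> nat) : nat :=
  let L := (\max_(i < n) (x i).1)%N in
  \sum_(i < n) p ^ (L - (x i).1) * padic_res (x i).2 L * (a i %% p ^ L).

Lemma modE3 (K a u r Q : nat) :
  (K * ((a + u) %% Q) + r) %% Q = ((K * (a %% Q) + r) %% Q + K * u) %% Q.
Proof.
have e1 : (K * ((a + u) %% Q) + r) %% Q = (K * (a + u) + r) %% Q.
  rewrite -[LHS]modnDml. rewrite modnMmr. rewrite modnDml. done.
have e2 : ((K * (a %% Q) + r) %% Q + K * u) %% Q = (K * a + r + K * u) %% Q.
  rewrite modnDml -addnA. rewrite -[LHS]modnDml. rewrite modnMmr. rewrite modnDml addnA. done.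
rewrite e1 e2. rewrite mulnDr. by rewrite addnAC.
Qed.

Lemma Wsum_tau p k n (x : 'I_n -> padic_num p) i0 u (a : {ffun 'I_n -> 'I_(p ^ k)}) :
  0 < p -> (\max_(i < n) (x i).1)%N <= k ->
  let L := (\max_(i < n) (x i).1)%N in
  Wsum x (fun i => @tau p k n i0 u a i) %% p ^ L =
  (Wsum x (fun i => a i) %% p ^ L + p ^ (L - (x i0).1) * padic_res (x i0).2 L * u) %% p ^ L.
Proof.
move=> p0 Lk L; rewrite /Wsum -/L.
rewrite (bigD1 i0) // [in RHS](bigD1 i0) //= tau_val // eqxx.
have -> : \sum_(i < n | i != i0) p ^ (L - (x i).1) * padic_res (x i).2 L * (@tau p k n i0 u a i %% p ^ L)
   = \sum_(i < n | i != i0) p ^ (L - (x i).1) * padic_res (x i).2 L * (a i %% p ^ L).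
  by apply: eq_bigr => i /negbTE ne; rewrite tau_val // ne.
rewrite (modn_dvdm _ (dvdn_exp2l p Lk)).
exact: modE3.
Qed.

End M_F.
Import M_F.

Module M_G.
Set Implicit Arguments. Unset Strict Implicit. Unset Printing Implicit Defensive.
Import Order.TTheory GRing.Theory Num.Theory numFieldNormedType.Exports.
Local Open Scope classical_set_scope.
Local Open Scope ring_scope.

Lemma split_bound (R : realType) (T : finType) (D : pred T) (c G : T -> R) :
  \sum_(a | D a) c a * 1 = 0 -> \sum_(a | ~~ D a) c a * G a = 0 ->
  (forall a, `|c a| <= 1) -> (forall a, 0 <= 1 - G a) ->
  `|\sum_a c a * G a| <= \sum_(a | D a) (1 - G a).
Proof.
move=> V1 V2 c1 G1; rewrite (bigID D) /= V2 addr0.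
have -> : \sum_(a | D a) c a * G a = \sum_(a | D a) c a * 1 - \sum_(a | D a) c a * (1 - G a).
  rewrite -sumrB; apply: eq_bigr => a _; ring.
rewrite V1 sub0r.
rewrite normrN; apply: le_trans (ler_norm_sum _ _ _) _.
apply: ler_sum => a _; rewrite normrM (ger0_norm (G1 a)).
by rewrite -[X in _ <= X]mul1r ler_wpM2r.
Qed.

Lemma nonvanish (p L m0 m v0 s : nat) (y : padic_int p) : (0 < p)%N ->
  padic_res y v0.+1 != 0%N -> m0 = (m + v0)%N -> (m0 <= L)%N -> (s < m)%N ->
  ~~ (p ^ L %| p ^ (L - m0) * padic_res y L * p ^ s)%N.
Proof.
move=> p0 yv em0 m0L sm; apply/negP => h.
have sm0 : (s <= m0)%N by rewrite em0; apply: leq_trans (ltnW sm) (leq_addr _ _).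
have eL : L = ((L - m0 + s) + (m0 - s))%N.
  by rewrite -addnA subnKC // subnK.
move: h; rewrite mulnAC -expnD {1}eL expnD dvdn_pmul2l ?expn_gt0 ?p0 // => h.
have h2 : (p ^ v0.+1 %| padic_res y L)%N.
  apply: dvdn_trans h; apply: dvdn_exp2l; lia.
move/eqP: yv; apply; rewrite -(res_compat y p0 (_ : v0.+1 <= L)%N).
  by apply/eqP.
lia.
Qed.

End M_G.
Import M_G.

Module M_G2.
Set Implicit Arguments. Unset Strict Implicit. Unset Printing Implicit Defensive.
Import Order.TTheory GRing.Theory Num.Theory numFieldNormedType.Exports.
Local Open Scope ring_scope.

Lemma G_inv (R : realType) p n d M (f : zpoly p n) k (i0 : 'I_n) (m J : nat)
  (a : {ffun 'I_n -> 'I_(p ^ k)}) :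
  prime p -> all (fun s => mdeg s.1 == d) f -> HypM R f M ->
  (J + M.+1 = m)%N -> (m <= k)%N -> ~~ Bset J a ->
  padic_abs_res (R:=R) p (zpoly_eval_res f (pn p (fun i => @tau p k n i0 (p ^ m.-1) a i))) =
  padic_abs_res (R:=R) p (zpoly_eval_res f (pn p (fun i => a i))).
Proof.
move=> pp Hd HM eJ mk nB.
have p0 : (0 < p)%N by apply: prime_gt0.
have B0 : Bset 0 a by apply/forallP => i; rewrite expn0 dvd1n.
have J0 : (0 < J)%N by case: J eJ nB => // _; rewrite B0.
pose P := fun j => Bset j a && (j < J)%N.
have exP : exists j, P j by exists 0%N; rewrite /P J0 andbT.
have ubP : forall j, P j -> (j <= J)%N by move=> j /andP[_ /ltnW].
case: (ex_maxnP exP ubP) => j /andP[Bj jJ] maxj.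
have nBj1 : ~~ Bset j.+1 a.
  case: (ltngtP j.+1 J) => [lt|gt|eq]; last by rewrite eq.
    apply/negP => B1; have := maxj j.+1; rewrite /P B1 lt => /(_ isT); rewrite ltnn.
    by [].
  exfalso; lia.
move/forallPn: nBj1 => [i1 ni1].
have Bjt : Bset j (@tau p k n i0 (p ^ m.-1) a) by rewrite tau_B // ?dvdn_exp2l //; lia.
move/forallP: Bj => Bj; move/forallP: Bjt => Bjt.
symmetry; apply: (@loc_const R p n f d M _ _ (fun i => a i %/ p ^ j)%N
   (fun i => @tau p k n i0 (p ^ m.-1) a i %/ p ^ j)%N j) => //.
- by move=> i; rewrite mulnC divnK.
- by move=> i; rewrite mulnC divnK.
- move=> i.
  have c1 : (a i = @tau p k n i0 (p ^ m.-1) a i %[mod p ^ (j + (m.-1 - j))])%N.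
    rewrite subnKC; last by lia.
    rewrite tau_val //; case: eqP => // _.
    by rewrite (modn_dvdm _ (dvdn_exp2l p (_ : m.-1 <= k)%N)) ?modnDr //; lia.
  move: c1; rewrite -{1}(divnK (Bj i)) -{1}(divnK (Bjt i)) ![(_ %/ _ * _)%N]mulnC.
  move/(cancel_mod p0) => e.
  have dv : (p ^ M.+1 %| p ^ (m.-1 - j))%N by apply: dvdn_exp2l; lia.
  by rewrite -(modn_dvdm (a i %/ p ^ j)%N dv) e (modn_dvdm _ dv).
- exists i1; apply/negP => h; case/negP: ni1.
  by rewrite -(divnK (Bj i1)) expnS dvdn_mul.
Qed.
Lemma G_inv' (R : realType) p n d M (f : zpoly p n) k (i0 : 'I_n) (m J : nat)
  (a : {ffun 'I_n -> 'I_(p ^ k)}) :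
  prime p -> all (fun s => mdeg s.1 == d) f -> HypM R f M ->
  (J + M.+1 = m)%N -> (m <= k)%N -> ~~ Bset J a ->
  padic_abs_res (R:=R) p (zpoly_eval_res f (fun i => pint_of_nat p (@tau p k n i0 (p ^ m.-1) a i))) =
  padic_abs_res (R:=R) p (zpoly_eval_res f (fun i => pint_of_nat p (a i))).
Proof. exact: G_inv. Qed.

End M_G2.
Import M_G2.

Module M_G3.
Set Implicit Arguments. Unset Strict Implicit. Unset Printing Implicit Defensive.
Import Order.TTheory GRing.Theory Num.Theory numFieldNormedType.Exports.
Local Open Scope ring_scope.

Lemma riemann_est (R : realType) p n d M (beta t : R) (f : zpoly p n)
  (x : 'I_n -> padic_num p) (i0 : 'I_n) (m v0 k : nat) :
  prime p -> (0 < n)%N -> 0 < beta -> 0 < t -> all (fun s => mdeg s.1 == d) f -> HypM R f M ->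
  padic_res (x i0).2 v0.+1 != 0%N -> (x i0).1 = (m + v0)%N -> (M.+1 <= m)%N ->
  (\max_(i < n) (x i).1 <= k)%N -> (m <= k)%N ->
  `|haar_riemann_sum (Z0_integrand_re f beta x t) k| <=
     t * ((p%:R : R) `^ (- (d%:R * beta) - n%:R)) ^+ (m - M.+1)
       / (1 - (p%:R : R) `^ (- (d%:R * beta) - n%:R)) /\
  `|haar_riemann_sum (Z0_integrand_im f beta x t) k| <=
     t * ((p%:R : R) `^ (- (d%:R * beta) - n%:R)) ^+ (m - M.+1)
       / (1 - (p%:R : R) `^ (- (d%:R * beta) - n%:R)).
Proof.
move=> pp n0 b0 t0 Hd HM yv em0 Mm Lk mk.
have p0 : (0 < p)%N by apply: prime_gt0.
have p1 : (1 < p)%N by apply: prime_gt1.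
set pr := (p%:R : R).
have pr0 : 0 < pr by rewrite ltr0n.
have pr1 : 1 < pr by rewrite ltr1n.
set qd := pr `^ (- (d%:R * beta)).
set rho := pr `^ (- (d%:R * beta) - n%:R).
have erho : rho = qd / pr ^+ n by rewrite /rho rho_eq.
have rho0 : 0 <= rho by apply: powR_ge0.
have rho1 : rho < 1.
  apply: powR_lt1 => //.
  have : 0 <= d%:R * beta by rewrite mulr_ge0 // ltW.
  have : (0 : R) < n%:R by rewrite ltr0n.
  lra.
set J := (m - M.+1)%N.
have eJ : (J + M.+1 = m)%N by rewrite subnK.
set L := (\max_(i < n) (x i).1)%N.
have m0L : ((x i0).1 <= L)%N by apply: (@leq_bigmax _ (fun i => (x i).1) i0).
pose T := {ffun 'I_n -> 'I_(p ^ k)}.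
pose th := fun a : T => 2 * pi * dot_frac (R:=R) x (fun i => pint_of_nat p (a i)).
pose G := fun a : T =>
  expR (- t * (padic_abs_res p (zpoly_eval_res f (fun i => pint_of_nat p (a i))) `^ beta)).
pose K := (p ^ (L - (x i0).1) * padic_res (x i0).2 L)%N.
pose phi := fun u : nat => 2 * pi * ((K * u)%N%:R / (p ^ L)%N%:R) : R.
have pL0 : (0 < p ^ L)%N by rewrite expn_gt0 p0.
have thE : forall a, th a = 2 * pi * ((Wsum x (fun i => a i) %% p ^ L)%N%:R / (p ^ L)%N%:R).
  by move=> a; rewrite /th /dot_frac natrX.
have distr : forall A B Q : R, 2 * pi * ((A + B) / Q) = 2 * pi * (A / Q) + 2 * pi * (B / Q).
  by move=> A B Q; rewrite -mulrDr -mulrDl.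
have phase_c : forall u a, cos (th (@tau p k n i0 u a)) = cos (th a + phi u).
  move=> u a; rewrite !thE (Wsum_tau _ _ _ p0 Lk) cos_frac // natrD distr.
  by rewrite /phi.
have phase_s : forall u a, sin (th (@tau p k n i0 u a)) = sin (th a + phi u).
  move=> u a; rewrite !thE (Wsum_tau _ _ _ p0 Lk) sin_frac // natrD distr.
  by rewrite /phi.
have cne : forall s, (s < m)%N -> cos (phi (p ^ s)%N) != 1.
  move=> s sm; rewrite /phi -cos_frac //; apply: cos_ne1; last exact: ltn_pmod.
  rewrite lt0n; have := nonvanish p0 yv em0 m0L sm.
  by rewrite /dvdn /K.
have Jk : (J <= k)%N by lia.
have V1 := @shift_vanish R T (@tau p k n i0 (p ^ J)) (fun a => Bset J a) th (fun _ => 1)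
  (phi (p ^ J)%N) (@tau_inj p k n i0 (p ^ J) p0) (fun a => @tau_B p k n i0 (p ^ J) J a p0 Jk (dvdnn _))
  (cne J (_ : J < m)%N) (phase_c _) (phase_s _) (fun _ _ => erefl).
have Vm : (m.-1 < m)%N by lia.
have V2 := @shift_vanish R T (@tau p k n i0 (p ^ m.-1)) (fun a => ~~ Bset J a) th G
  (phi (p ^ m.-1)%N) (@tau_inj p k n i0 (p ^ m.-1) p0)
  (fun a => congr1 negb (@tau_B p k n i0 (p ^ m.-1) J a p0 Jk (dvdn_exp2l p (_ : J <= m.-1)%N)))
  (cne _ Vm) (phase_c _) (phase_s _) _.
have Jm : (J < m)%N by rewrite -eJ addnS ltnS leq_addr.
have [V1c V1s] := V1 Jm.
have Ginv : forall a : T, ~~ Bset J a -> G (@tau p k n i0 (p ^ m.-1) a) = G a.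
  move=> a nB; rewrite /G.
  by rewrite (@G_inv' R p n d M f k i0 m J a pp Hd HM eJ mk nB).
have [V2c V2s] := V2 (ltac:(lia)) Ginv.
have h0 : forall a, 0 <= 1 - G a.
  move=> a; rewrite subr_ge0 /G expR_le1 mulNr oppr_le0 mulr_ge0 ?powR_ge0 //.
  exact: ltW.
have S2 : \sum_(a | Bset J a) (1 - G a) <= t * pr ^+ (k * n) * rho ^+ J / (1 - rho).
  apply: (@shell_sum R T (fun j a => Bset j a) (fun a => 1 - G a) (fun j => t * qd ^+ j) k) => //.
  - by rewrite mulr_ge0 ?exprn_ge0 // ltW.
  - by move=> j a _; apply: B_mon.
  - move=> j a jk Bj.
    have X0 : 0 <= padic_abs_res (R:=R) p (zpoly_eval_res f (fun i => pint_of_nat p (a i))).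
      by apply: (@absr_ge0 R p) => //; rewrite /zpoly_eval_res expn0 modn1.
    have Xle : padic_abs_res (R:=R) p (zpoly_eval_res f (fun i => pint_of_nat p (a i))) `^ beta <= qd ^+ j.
      rewrite /qd -(pow_inv_beta beta j d pr0).
      apply: ge0_ler_powR; first exact: ltW.
      + by rewrite nnegrE.
      + by rewrite nnegrE invr_ge0 exprn_ge0 // ltW.
      apply: (@up_bound R p n f d (fun i => a i) j pp Hd).
      by move/forallP: Bj.
    by rewrite /G; apply: one_sub_exp.
  - move=> j jk.
    have -> : #|(fun a : T => Bset j a)| = ((p ^ (k - j)) ^ n)%N.
      by rewrite -(@card_B n p k j p0 jk); apply: eq_card.
    by rewrite card_real // -erho.
have bnd : forall c : T -> R, (forall a, `|c a| <= 1) ->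
    \sum_(a | Bset J a) c a * 1 = 0 -> \sum_(a | ~~ Bset J a) c a * G a = 0 ->
    `|pr ^- (k * n) * \sum_a c a * G a| <= t * rho ^+ J / (1 - rho).
  move=> c c1 W1 W2; have S1 := split_bound W1 W2 c1 h0.
  have pk0 : 0 <= pr ^- (k * n) by rewrite invr_ge0 exprn_ge0 // ltW.
  rewrite normrM ger0_norm //.
  apply: le_trans (ler_wpM2l pk0 (le_trans S1 S2)) _.
  rewrite le_eqVlt; apply/orP; left; apply/eqP; field.
  apply/andP; split; first by rewrite subr_eq0 eq_sym lt_eqF.
  by rewrite expf_neq0 // gt_eqF.
split.
  exact: (bnd (fun a => cos (th a)) (fun a => cos_max _) V1c V2c).
exact: (bnd (fun a => sin (th a)) (fun a => sin_max _) V1s V2s).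
Qed.

End M_G3.
Import M_G3.

Module M_H.
Set Implicit Arguments. Unset Strict Implicit. Unset Printing Implicit Defensive.
Import Order.TTheory GRing.Theory Num.Theory numFieldNormedType.Exports.
Local Open Scope classical_set_scope.
Local Open Scope ring_scope.

Lemma vnorm_att (R : realType) p n (x : 'I_n -> padic_num p) :
  padic_vnorm (R:=R) x = 0 \/ exists i, padic_vnorm (R:=R) x = padic_abs_num (R:=R) (x i).
Proof.
rewrite /padic_vnorm; apply: (big_ind (fun v => v = 0 \/ exists i, v = padic_abs_num (x i))).
- by left.
- by move=> a b Ha Hb; rewrite /Num.max; case: ifP.
- by move=> i _; right; exists i.
Qed.

Lemma final_ineq (R : realType) (t rho B Ire Iim : R) : 0 <= B ->
  `|Ire| <= B -> `|Iim| <= B -> Num.sqrt (Ire ^+ 2 + Iim ^+ 2) <= 2 * B.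
Proof.
move=> B0 h1 h2.
have h : Ire ^+ 2 + Iim ^+ 2 <= (2 * B) ^+ 2.
  move: h1 h2; rewrite !ler_norml => /andP[a1 a2] /andP[b1 b2]; nra.
rewrite -(ger0_norm (_ : 0 <= 2 * B)); last by rewrite mulr_ge0.
by rewrite -sqrtr_sqr ler_sqrt // sqr_ge0.
Qed.


End M_H.
Import M_H.

Unset Implicit Arguments.
Set Strict Implicit.
Import Order.TTheory GRing.Theory Num.Theory numFieldNormedType.Exports.
Local Open Scope classical_set_scope.
Local Open Scope ring_scope.

Theorem lemma4 (R : realType) (p n d M : nat) (beta : R) (f : zpoly p n) :
  prime p -> (1 <= n)%N -> 0 < beta -> elliptic f d -> (0 < M)%N ->
  (forall xi : 'I_n -> padic_int p,
      (exists i, padic_abs_res p (padic_res (xi i)) = (1 : R)) ->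
      (p%:R : R) ^- M <= padic_abs_res p (zpoly_eval_res f xi)) ->
  exists Rc C : R, 0 < Rc /\ 0 < C /\
    forall (x : 'I_n -> padic_num p) (t : R),
      Rc <= padic_vnorm (R:=R) x -> 0 < t ->
      (p%:R : R) `^ (M.+1%:R * d%:R * beta) * t *
        padic_vnorm (R:=R) x `^ (- (d%:R * beta)) <= 1 ->
      Z0_abs f beta x t <= C * t * padic_vnorm (R:=R) x `^ (- (d%:R * beta) - n%:R).
Proof.
move=> pp n1 b0 [d0 Hd _] M0 HM.
have p0 : (0 < p)%N by apply: prime_gt0.
have p1 : (1 < p)%N by apply: prime_gt1.
set pr := (p%:R : R).
have pr0 : 0 < pr by rewrite ltr0n.
have pr1 : 1 < pr by rewrite ltr1n.
set rho := pr `^ (- (d%:R * beta) - n%:R).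
have rho0 : 0 < rho by apply: powR_gt0.
have rho1 : rho < 1.
  apply: powR_lt1 => //.
  have : 0 <= d%:R * beta by rewrite mulr_ge0 // ltW.
  have : (0 : R) < n%:R by rewrite ltr0n.
  lra.
have r1 : 0 < 1 - rho by rewrite subr_gt0.
exists (pr ^+ M.+1), (2 / ((1 - rho) * rho ^+ M.+1)).
split; first by rewrite exprn_gt0.
split; first by rewrite divr_gt0 // mulr_gt0 // exprn_gt0.
move=> x t Hx t0 _.
have vpos : 0 < padic_vnorm (R:=R) x by apply: lt_le_trans Hx; rewrite exprn_gt0.
have [i0 Hi0] : exists i, padic_vnorm (R:=R) x = padic_abs_num (R:=R) (x i).
  by case: (vnorm_att R x) => // h; move: vpos; rewrite h ltxx.
set m0 := (x i0).1; set y := (x i0).2.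
have Hi0' : padic_vnorm (R:=R) x = pr ^+ m0 * padic_abs_res (R:=R) p (padic_res y) by rewrite Hi0.
have ex : exists K1, padic_res y K1 != 0%N.
  case: (pselect (exists K1, padic_res y K1 != 0%N)) => // nex; exfalso.
  have z : padic_res y (m0 + M.+1) = 0%N.
    by apply/eqP; apply: contrapT => /negP h; apply: nex; exists (m0 + M.+1)%N.
  have := @absr_le R p _ _ p1 z.
  have a0 : 0 <= padic_abs_res (R:=R) p (padic_res y) by apply: absr_ge0 => //; exact: res0.
  move=> /(ler_wpM2l (exprn_ge0 m0 (ltW pr0))).
  rewrite -Hi0' exprD invfM mulrA divff ?mul1r ?expf_neq0 ?gt_eqF // => h.
  have := le_trans Hx h; apply/negP; rewrite -ltNge.
  apply: (@lt_trans _ _ 1); first by rewrite invf_lt1 ?exprn_gt0 // exprn_egt1.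
  by rewrite exprn_egt1.
case: (ex_minnP ex) => K0 yK0 minK0.
have K0pos : (0 < K0)%N by case: K0 yK0 {minK0} => //; rewrite res0.
set v0 := K0.-1.
have eK0 : K0 = v0.+1 by rewrite prednK.
have yv : padic_res y v0.+1 != 0%N by rewrite -eK0.
have absy : padic_abs_res (R:=R) p (padic_res y) = pr ^- v0.
  apply: absr_exact => // k; split.
    move=> yk; rewrite leqNgt; apply/negP => vk.
    move: yK0; rewrite -(res_compat y p0 (_ : K0 <= k)%N) ?yk ?mod0n //.
    by rewrite eK0.
  move=> kv; apply/eqP; apply: contraTT kv => /minK0; rewrite -ltnNge eK0.
  by [].
have vE : padic_vnorm (R:=R) x = pr ^+ m0 * pr ^- v0 by rewrite Hi0' absy.
have m0v : (v0 + M.+1 <= m0)%N.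
  rewrite leqNgt; apply/negP => lt.
  have : padic_vnorm (R:=R) x <= pr ^+ M.
    rewrite vE ler_pdivrMr ?exprn_gt0 // -exprD.
    by rewrite ler_eXn2l //; lia.
  move=> h; have := le_trans Hx h; apply/negP; rewrite -ltNge.
  by rewrite ltr_eXn2l.
set m := (m0 - v0)%N.
have em0 : m0 = (m + v0)%N by rewrite subnK //; lia.
have Mm : (M.+1 <= m)%N by lia.
have vm : padic_vnorm (R:=R) x = pr ^+ m.
  by rewrite vE em0 exprD mulfK ?expf_neq0 ?gt_eqF.
set L := (\max_(i < n) (x i).1)%N.
set B := t * rho ^+ (m - M.+1) / (1 - rho).
have B0 : 0 <= B by rewrite divr_ge0 ?mulr_ge0 ?exprn_ge0 // ?ltW.
have est : forall k, (maxn L m <= k)%N ->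
    (`|haar_riemann_sum (Z0_integrand_re f beta x t) k| <= B) /\
    (`|haar_riemann_sum (Z0_integrand_im f beta x t) k| <= B).
  move=> k; rewrite geq_max => /andP[Lk mk].
  have h := (@riemann_est R p n d M beta t f x i0 m v0 k pp n1 b0 t0 Hd HM yv em0 Mm Lk mk).
  exact h.
have Ire : `|haar_integral_Zpn (Z0_integrand_re f beta x t)| <= B.
  by apply: lim_bound => //; exists (maxn L m) => k /est [h _].
have Iim : `|haar_integral_Zpn (Z0_integrand_im f beta x t)| <= B.
  by apply: lim_bound => //; exists (maxn L m) => k /est [_ h].
rewrite /Z0_abs; apply: le_trans (final_ineq t rho B0 Ire Iim) _.
rewrite vm powR_exprn ?(ltW pr0) // -/rho /B.
have e : rho ^+ m = rho ^+ (m - M.+1) * rho ^+ M.+1 by rewrite -exprD subnK.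
rewrite e le_eqVlt; apply/orP; left; apply/eqP; field.
apply/andP; split; first by rewrite expf_neq0 // gt_eqF.
by rewrite subr_eq0 eq_sym lt_eqF.
Qed.
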